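(* Let $\mathfrak{M}=(S,\mathcal{L})$ be a Veblenian gamma space all of whose lines have at least $4$ points, and let $\mathcal{H}$ be a hyperplane of $\mathfrak{M}$. A set $X\subseteq S$ is a strong subspace of the complement $\mathfrak{M}\setminus\mathcal{H}$ if and only if there is a strong subspace $Y$ of $\mathfrak{M}$ such that $X=Y\setminus\mathcal{H}$.
   Context: A partial linear space is a pair $(S,\mathcal{L})$ of points and lines ($\mathcal{L}$ a family of subsets of $S$) such that every line has at least two points, every point is on a line, and two distinct lines share at most one point; points are collinear ($a\sim b$) if some line contains both, and two lines are adjacent if they share a point. A subspace is a set $X$ such that every line meeting $X$ in at least two points lies in $X$; it is strong if any two of its points are collinear. A hyperplane is a proper subspace meeting every line. A gamma space is a partial linear space in which, for every point $a$, the set of points collinear with $a$ is a subspace. It is Veblenian if for any two distinct lines $L_1,L_2$ through a point $p$ and any two distinct lines $K_1,K_2$ not through $p$ such that each $K_j$ meets both $L_1$ and $L_2$, the lines $K_1,K_2$ meet. For a hyperplane $\mathcal{H}$, every line $L\not\subseteq\mathcal{H}$ meets $\mathcal{H}$ in a unique point $L^\infty$. The complement $\mathfrak{M}\setminus\mathcal{H}$ is the structure with point set $S\setminus\mathcal{H}$, lines $L\setminus\mathcal{H}$ for $L\in\mathcal{L}$ with $L\not\subseteq\mathcal{H}$, and parallelism $\parallel_{\mathcal{H}}$ given by $L\parallel_\mathcal{H}K$ iff $L^\infty=K^\infty$; subspaces and strong subspaces of the complement are taken with respect to its points and lines. *)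

(* Defs.v *)
Definition subset {T : Type} (A B : T -> Prop) : Prop := forall x, A x -> B x.
Definition seteq {T : Type} (A B : T -> Prop) : Prop := forall x, A x <-> B x.

Definition collinear {T : Type} (Ln : (T -> Prop) -> Prop) (a b : T) : Prop :=
  exists l, Ln l /\ l a /\ l b.

(* Partial linear space (S,L) with S = the whole type T. *)
Definition partial_linear_space {T : Type} (Ln : (T -> Prop) -> Prop) : Prop :=
  (forall l, Ln l -> exists a b, a <> b /\ l a /\ l b) /\
  (forall p : T, exists l, Ln l /\ l p) /\
  (forall l1 l2, Ln l1 -> Ln l2 -> ~ seteq l1 l2 ->
     forall a b, l1 a -> l1 b -> l2 a -> l2 b -> a = b).

Definition subspace {T : Type} (P : T -> Prop) (Ln : (T -> Prop) -> Prop)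
  (X : T -> Prop) : Prop :=
  subset X P /\
  (forall l, Ln l -> forall a b, a <> b -> l a -> l b -> X a -> X b -> subset l X).

Definition strong_subspace {T : Type} (P : T -> Prop) (Ln : (T -> Prop) -> Prop)
  (X : T -> Prop) : Prop :=
  subspace P Ln X /\ (forall a b, X a -> X b -> collinear Ln a b).

Definition fullset {T : Type} : T -> Prop := fun _ => True.

Definition gamma_space {T : Type} (Ln : (T -> Prop) -> Prop) : Prop :=
  partial_linear_space Ln /\ (forall a, subspace fullset Ln (collinear Ln a)).

Definition meet {T : Type} (l k : T -> Prop) : Prop := exists x, l x /\ k x.

Definition veblenian {T : Type} (Ln : (T -> Prop) -> Prop) : Prop :=
  forall (p : T) L1 L2 K1 K2,
    Ln L1 -> Ln L2 -> Ln K1 -> Ln K2 ->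
    ~ seteq L1 L2 -> L1 p -> L2 p ->
    ~ seteq K1 K2 -> ~ K1 p -> ~ K2 p ->
    meet K1 L1 -> meet K1 L2 -> meet K2 L1 -> meet K2 L2 ->
    meet K1 K2.

Definition lines_at_least_4 {T : Type} (Ln : (T -> Prop) -> Prop) : Prop :=
  forall l, Ln l -> exists a b c d : T,
    l a /\ l b /\ l c /\ l d /\
    a <> b /\ a <> c /\ a <> d /\ b <> c /\ b <> d /\ c <> d.

Definition hyperplane {T : Type} (Ln : (T -> Prop) -> Prop) (H : T -> Prop) : Prop :=
  subspace fullset Ln H /\ (exists x, ~ H x) /\ (forall l, Ln l -> meet l H).

(* Complement M \ H: points S \ H, lines L \ H for lines L not contained in H.
   (The parallelism of the complement plays no role in the notions of
   (strong) subspace and is omitted.) *)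
Definition compl_points {T : Type} (H : T -> Prop) : T -> Prop := fun x => ~ H x.

Definition compl_lines {T : Type} (Ln : (T -> Prop) -> Prop) (H : T -> Prop)
  (l' : T -> Prop) : Prop :=
  exists l, Ln l /\ ~ subset l H /\ seteq l' (fun x => l x /\ ~ H x).

(* Main.v *)
Require Import Defs.
From Stdlib Require Import Classical.

Lemma line_eq {T} (Ln : (T -> Prop) -> Prop) l1 l2 a b :
  partial_linear_space Ln -> Ln l1 -> Ln l2 -> a <> b -> l1 a -> l1 b -> l2 a -> l2 b ->
  seteq l1 l2.
Proof.
  intros [_ [_ P]] H1 H2 ab A1 B1 A2 B2. apply NNPP; intro N.
  apply ab. exact (P l1 l2 H1 H2 N a b A1 B1 A2 B2).
Qed.

Lemma hyp_line {T} (Ln : (T -> Prop) -> Prop) H l a x y :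
  hyperplane Ln H -> Ln l -> l a -> ~ H a -> l x -> l y -> H x -> H y -> x = y.
Proof.
  intros [[_ S] _] Hl la na lx ly hx hy. apply NNPP; intro N.
  apply na. exact (S l Hl x y N lx ly hx hy a la).
Qed.

Lemma extra_point {T} (Ln : (T -> Prop) -> Prop) H K c d :
  lines_at_least_4 Ln -> Ln K -> (forall x y, K x -> K y -> H x -> H y -> x = y) ->
  exists e, K e /\ ~ H e /\ e <> c /\ e <> d.
Proof.
  intros L4 HK U. destruct (L4 K HK) as [p1 [p2 [p3 [p4 [k1 [k2 [k3 [k4 D]]]]]]]].
  destruct (classic (H p1 \/ p1 = c \/ p1 = d)) as [q1|q1]; [|exists p1; tauto].
  destruct (classic (H p2 \/ p2 = c \/ p2 = d)) as [q2|q2]; [|exists p2; tauto].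
  destruct (classic (H p3 \/ p3 = c \/ p3 = d)) as [q3|q3]; [|exists p3; tauto].
  destruct (classic (H p4 \/ p4 = c \/ p4 = d)) as [q4|q4]; [|exists p4; tauto].
  exfalso.
  pose proof (U p1 p2 k1 k2). pose proof (U p1 p3 k1 k3). pose proof (U p1 p4 k1 k4).
  pose proof (U p2 p3 k2 k3). pose proof (U p2 p4 k2 k4). pose proof (U p3 p4 k3 k4).
  intuition (subst; congruence).
Qed.

Definition Yinf {T} (Ln : (T -> Prop) -> Prop) (X : T -> Prop) (p : T) : Prop :=
  exists a b l, X a /\ X b /\ a <> b /\ Ln l /\ l a /\ l b /\ l p.

Lemma col_sym {T} (Ln : (T -> Prop) -> Prop) a b : collinear Ln a b -> collinear Ln b a.
Proof. intros [l [h [x y]]]; exists l; auto. Qed.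

Lemma gam {T} (Ln : (T -> Prop) -> Prop) q a b l p :
  gamma_space Ln -> collinear Ln q a -> collinear Ln q b -> a <> b -> Ln l -> l a -> l b -> l p ->
  collinear Ln q p.
Proof.
  intros [_ G] qa qb ab Hl la lb lp. destruct (G q) as [_ S].
  exact (S l Hl a b ab la lb qa qb p lp).
Qed.

Lemma X_notH {T} (Ln : (T -> Prop) -> Prop) H X x :
  strong_subspace (compl_points H) (compl_lines Ln H) X -> X x -> ~ H x.
Proof. intros [[S _] _] Xx. exact (S x Xx). Qed.

Lemma X_clos {T} (Ln : (T -> Prop) -> Prop) H X l a b p :
  strong_subspace (compl_points H) (compl_lines Ln H) X ->
  Ln l -> a <> b -> l a -> l b -> X a -> X b -> l p -> ~ H p -> X p.
Proof.
  intros SX Hl ab la lb Xa Xb lp np. pose proof (X_notH _ _ _ _ SX Xa) as na.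
  pose proof (X_notH _ _ _ _ SX Xb) as nb.
  destruct SX as [[_ C] _].
  apply (C (fun x => l x /\ ~ H x)) with a b; auto.
  - exists l. split; [exact Hl|]. split; [intro s; exact (na (s a la))|]. intro; tauto.
Qed.

Lemma X_col {T} (Ln : (T -> Prop) -> Prop) H X a b :
  strong_subspace (compl_points H) (compl_lines Ln H) X -> X a -> X b -> collinear Ln a b.
Proof.
  intros [_ C] Xa Xb. destruct (C a b Xa Xb) as [l' [[l [Hl [_ E]]] [A B]]].
  exists l. apply E in A. apply E in B. tauto.
Qed.

Lemma col_XY {T} (Ln : (T -> Prop) -> Prop) H X x p :
  gamma_space Ln -> strong_subspace (compl_points H) (compl_lines Ln H) X ->
  X x -> (X p \/ Yinf Ln X p) -> collinear Ln x p.
Proof.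
  intros G SX Xx [Xp|[a [b [l [Xa [Xb [ab [Hl [la [lb lp]]]]]]]]]].
  - exact (X_col _ _ _ _ _ SX Xx Xp).
  - apply (gam _ x a b l p G); auto; eapply X_col; eauto.
Qed.

Lemma col_YY {T} (Ln : (T -> Prop) -> Prop) H X q p :
  gamma_space Ln -> strong_subspace (compl_points H) (compl_lines Ln H) X ->
  (X q \/ Yinf Ln X q) -> (X p \/ Yinf Ln X p) -> collinear Ln q p.
Proof.
  intros G SX Yq [Xp|[a [b [l [Xa [Xb [ab [Hl [la [lb lp]]]]]]]]]].
  - apply col_sym. eapply col_XY; eauto.
  - apply (gam _ q a b l p G); auto; apply col_sym; eapply col_XY; eauto.
Qed.

Lemma Y_X {T} (Ln : (T -> Prop) -> Prop) H X p :
  strong_subspace (compl_points H) (compl_lines Ln H) X ->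
  (X p \/ Yinf Ln X p) -> ~ H p -> X p.
Proof.
  intros SX [Xp|[a [b [l [Xa [Xb [ab [Hl [la [lb lp]]]]]]]]]] np; auto.
  eapply X_clos; eauto.
Qed.

Lemma key1 {T} (Ln : (T -> Prop) -> Prop) H X u v l w :
  gamma_space Ln -> veblenian Ln -> lines_at_least_4 Ln -> hyperplane Ln H ->
  strong_subspace (compl_points H) (compl_lines Ln H) X ->
  X u -> Yinf Ln X v -> H v -> Ln l -> l u -> l v -> l w -> ~ H w -> X w.
Proof.
  intros G V L4 HH SX Xu [c [d [K [Xc [Xd [cd [HK [Kc [Kd Kv]]]]]]]]] Hv Hl lu lv lw nw.
  pose proof (proj1 G) as PL.
  pose proof (X_notH _ _ _ _ SX Xu) as nu.
  pose proof (X_notH _ _ _ _ SX Xc) as nc.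
  pose proof (X_notH _ _ _ _ SX Xd) as nd.
  assert (uv : u <> v) by (intro; subst; tauto).
  assert (wv : w <> v) by (intro; subst; tauto).
  assert (cv : c <> v) by (intro; subst; tauto).
  destruct (classic (l c)) as [lc|nlc].
  { assert (E : seteq l K) by (apply (line_eq Ln l K c v); auto).
    apply (X_clos Ln H X K c d w); auto. apply E; auto. }
  assert (notl : forall x, K x -> x <> v -> l x -> False).
  { intros x Kx xv lx. apply nlc. apply (line_eq Ln l K x v); auto. }
  destruct (classic (w = u)) as [->|wu]; auto.
  assert (Uk : forall x y, K x -> K y -> H x -> H y -> x = y)
    by (intros; apply (hyp_line Ln H K c); auto).
  destruct (extra_point Ln H K c d L4 HK Uk) as [e [Ke [ne [ec ed]]]].
  assert (wc : collinear Ln c w).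
  { apply (gam Ln c u v l w G); auto. eapply X_col; eauto. exists K; auto. }
  destruct wc as [K1 [HK1 [K1c K1w]]].
  assert (step : forall d', X d' -> K d' -> d' <> c -> ~ l d' ->
    X w \/ exists K2 z, Ln K2 /\ K2 u /\ K2 d' /\ K1 z /\ K2 z /\ H z).
  { intros d' Xd' Kd' d'c nld'.
    destruct (X_col _ _ _ _ _ SX Xu Xd') as [K2 [HK2 [K2u K2d']]].
    assert (M : meet K1 K2).
    { apply (V v K l K1 K2); auto.
      - intro E. apply nlc. apply E; auto.
      - intro E. assert (K2c : K2 c) by (apply E; auto).
        assert (E2 : seteq K2 K) by (apply (line_eq Ln K2 K c d'); auto).
        apply (notl u); auto. apply E2; auto.
      - intro K1v. apply nlc. assert (E : seteq K1 l) by (apply (line_eq Ln K1 l v w); auto).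
        apply E; auto.
      - intro K2v. apply nld'. assert (E : seteq K2 l) by (apply (line_eq Ln K2 l v u); auto).
        apply E; auto.
      - exists c; auto.
      - exists w; auto.
      - exists d'; auto.
      - exists u; auto. }
    destruct M as [z [K1z K2z]].
    destruct (classic (H z)) as [hz|nz].
    - right. exists K2, z. tauto.
    - left. assert (ud' : u <> d') by (intro; subst; tauto).
      assert (Xz : X z) by (apply (X_clos Ln H X K2 u d' z); auto).
      assert (zc : z <> c).
      { intro; subst z. assert (E2 : seteq K2 K) by (apply (line_eq Ln K2 K c d'); auto).
        apply (notl u); auto. apply E2; auto. }
      apply (X_clos Ln H X K1 z c w); auto. }
  assert (nle : ~ l e) by (intro; apply (notl e); auto; intro; subst; tauto).
  assert (nld : ~ l d) by (intro; apply (notl d); auto; intro; subst; tauto).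
  destruct (step d Xd Kd (not_eq_sym cd) nld) as [?|[K2 [z [HK2 [K2u [K2d [K1z [K2z hz]]]]]]]]; auto.
  assert (Xe : X e).
  { apply (X_clos Ln H X K c d e); auto. }
  destruct (step e Xe Ke ec nle) as [?|[K3 [z' [HK3 [K3u [K3e [K1z' [K3z' hz']]]]]]]]; auto.
  assert (zz : z = z') by (apply (hyp_line Ln H K1 c); auto).
  subst z'.
  assert (uz : u <> z) by (intro; subst; tauto).
  assert (E : seteq K3 K2) by (apply (line_eq Ln K3 K2 u z); auto).
  assert (E2 : seteq K2 K) by (apply (line_eq Ln K2 K d e); auto; apply E; auto).
  exfalso. apply (notl u); auto. apply E2; auto.
Qed.

Lemma caseB {T} (Ln : (T -> Prop) -> Prop) H X u v l p :
  gamma_space Ln -> veblenian Ln -> lines_at_least_4 Ln -> hyperplane Ln H ->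
  strong_subspace (compl_points H) (compl_lines Ln H) X ->
  X u -> (X v \/ Yinf Ln X v) -> H v -> Ln l -> l u -> l v -> l p ->
  X p \/ Yinf Ln X p.
Proof.
  intros G V L4 HH SX Xu Yv Hv Hl lu lv lp.
  assert (Yv' : Yinf Ln X v).
  { destruct Yv as [Xv|]; auto. exfalso. exact (X_notH _ _ _ _ SX Xv Hv). }
  pose proof (X_notH _ _ _ _ SX Xu) as nu.
  destruct (classic (H p)) as [hp|np].
  - right.
    assert (Uk : forall x y, l x -> l y -> H x -> H y -> x = y)
      by (intros; apply (hyp_line Ln H l u); auto).
    destruct (extra_point Ln H l u u L4 Hl Uk) as [f [lf [nf [fu _]]]].
    exists u, f, l. repeat split; auto.
    apply (key1 Ln H X u v l f); auto.
  - left. apply (key1 Ln H X u v l p); auto.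
Qed.

Lemma caseD {T} (Ln : (T -> Prop) -> Prop) H X u v l w :
  gamma_space Ln -> veblenian Ln -> lines_at_least_4 Ln -> hyperplane Ln H ->
  strong_subspace (compl_points H) (compl_lines Ln H) X ->
  Yinf Ln X u -> Yinf Ln X v -> u <> v -> H u -> H v -> Ln l -> l u -> l v -> l w ->
  Yinf Ln X w.
Proof.
  intros G V L4 HH SX Yu Yv uv Hu Hv Hl lu lv lw.
  pose proof (proj1 G) as PL.
  destruct (classic (w = u)) as [->|wu]; auto.
  destruct (classic (w = v)) as [->|wv]; auto.
  assert (lH : forall x, l x -> H x).
  { destruct HH as [[_ S] _]. exact (S l Hl u v uv lu lv Hu Hv). }
  destruct Yu as [a [b [K [Xa [Xb [ab [HK [Ka [Kb Ku]]]]]]]]].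
  pose proof (X_notH _ _ _ _ SX Xa) as na.
  assert (av : collinear Ln a v) by (apply (col_XY Ln H X); auto).
  destruct av as [M [HM [Ma Mv]]].
  assert (Mcl : forall x, M x -> ~ H x -> X x)
    by (intros; apply (key1 Ln H X a v M x); auto).
  assert (UkM : forall x y, M x -> M y -> H x -> H y -> x = y)
    by (intros; apply (hyp_line Ln H M a); auto).
  destruct (extra_point Ln H M a a L4 HM UkM) as [y [My [ny [ya _]]]].
  assert (Xy : X y) by auto.
  assert (Yu : X u \/ Yinf Ln X u) by (right; exists a, b, K; tauto).
  assert (uy : collinear Ln u y).
  { apply (gam Ln u a v M y G); auto.
    - apply col_sym. apply (col_XY Ln H X); auto.
    - exists l; auto.
    - intro; subst; tauto. }
  destruct uy as [P [HP [Pu Py]]].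
  assert (Pcl : forall x, P x -> ~ H x -> X x)
    by (intros; apply (key1 Ln H X y u P x); auto; exists a, b, K; tauto).
  assert (aw : collinear Ln a w).
  { apply (gam Ln a u v l w G); auto; apply (col_XY Ln H X); auto. }
  destruct aw as [N [HN [Na Nw]]].
  assert (nMu : ~ M u) by (intro Mu; apply uv; apply (UkM u v); auto).
  assert (nla : ~ l a) by (intro la; apply na; auto).
  assert (wv' : w <> v) by auto.
  assert (M0 : meet N P).
  { apply (V v l M N P); auto.
    - intro E. apply nla. apply E; auto.
    - intro E. assert (Pa : P a) by (apply E; auto).
      assert (E2 : seteq P M) by (apply (line_eq Ln P M a y); auto).
      apply nMu. apply E2; auto.
    - intro Nv. assert (E : seteq N l) by (apply (line_eq Ln N l w v); auto).
      apply nla. apply E; auto.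
    - intro Pv. assert (E : seteq P l) by (apply (line_eq Ln P l u v); auto).
      apply ny. apply lH. apply E; auto.
    - exists w; auto.
    - exists a; auto.
    - exists u; auto.
    - exists y; auto. }
  destruct M0 as [z [Nz Pz]].
  assert (nz : ~ H z).
  { intro hz. assert (zu : z = u) by (apply (hyp_line Ln H P y); auto). subst z.
    assert (E : seteq N l) by (apply (line_eq Ln N l w u); auto).
    apply nla. apply E; auto. }
  assert (za : z <> a).
  { intro; subst z. assert (E2 : seteq P M) by (apply (line_eq Ln P M a y); auto).
    apply nMu. apply E2; auto. }
  exists a, z, N. repeat split; auto.
Qed.

Theorem lemma2p4 (T : Type) (Ln : (T -> Prop) -> Prop) (H : T -> Prop) :
  gamma_space Ln -> veblenian Ln -> lines_at_least_4 Ln -> hyperplane Ln H ->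
  forall X : T -> Prop,
    strong_subspace (compl_points H) (compl_lines Ln H) X <->
    exists Y : T -> Prop, strong_subspace fullset Ln Y /\
      seteq X (fun x => Y x /\ ~ H x).
Proof.
  intros G V L4 HH X. split.
  - intro SX. exists (fun p => X p \/ Yinf Ln X p). split; [split; [split|]|].
    + intros x _. exact I.
    + intros l Hl a b ab la lb Ya Yb p lp.
      assert (YH : forall q, (X q \/ Yinf Ln X q) -> H q -> Yinf Ln X q).
      { intros q [Xq|?] hq; auto. exfalso; exact (X_notH _ _ _ _ SX Xq hq). }
      destruct (classic (H a)) as [ha|na]; destruct (classic (H b)) as [hb|nb].
      * right. apply (caseD Ln H X a b l p); auto.
      * apply (caseB Ln H X b a l p); auto. apply (Y_X Ln H X); auto.
      * apply (caseB Ln H X a b l p); auto. apply (Y_X Ln H X); auto.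
      * right. exists a, b, l. repeat split; auto; apply (Y_X Ln H X); auto.
    + intros a b Ya Yb. apply (col_YY Ln H X); auto.
    + intro x. split.
      * intro Xx. split; [left; auto|]. exact (X_notH _ _ _ _ SX Xx).
      * intros [Yx nx]. apply (Y_X Ln H X); auto.
  - intros [Y [[[_ YC] YL] E]]. split; [split|].
    + intros x Xx. apply E in Xx. exact (proj2 Xx).
    + intros l' [l [Hl [nsub El]]] a b ab la lb Xa Xb x lx.
      apply El in la. apply El in lb. apply El in lx. apply E in Xa. apply E in Xb.
      apply E. split; [|tauto].
      apply (YC l Hl a b ab (proj1 la) (proj1 lb) (proj1 Xa) (proj1 Xb) x (proj1 lx)).
    + intros a b Xa Xb. apply E in Xa. apply E in Xb.
      destruct (YL a b (proj1 Xa) (proj1 Xb)) as [l [Hl [la lb]]].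
      exists (fun x => l x /\ ~ H x). split; [|tauto].
      exists l. split; [auto|]. split.
      * intro s. exact (proj2 Xa (s a la)).
      * intro; tauto.
Qed.
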